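(* Let $(M,d)$ be a complete pointed metric space, $k\in\mathbb N$ and $\lambda_1,\dots,\lambda_k\in\mathbb R$. Then the set $\sum_{i=1}^k\lambda_i\delta(M):=\{\sum_{i=1}^k\lambda_i\delta(x_i):x_1,\dots,x_k\in M\}$ is a norm-closed subset of $\mathcal F(M)$.
   Context: A pointed metric space is a metric space with a distinguished point $0$. $\mathrm{Lip}_0(M)$ denotes the real-valued Lipschitz functions on $M$ vanishing at $0$, normed by the Lipschitz constant. $\delta:M\to\mathrm{Lip}_0(M)^*$, $\delta(x)(\varphi)=\varphi(x)$; the Lipschitz-free space $\mathcal F(M)$ is the norm-closed linear span of $\delta(M)$ in $\mathrm{Lip}_0(M)^*$. *)

(* Defs.v *)
From mathcomp Require Import all_boot all_order all_algebra.
From mathcomp Require Import reals.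
Set Implicit Arguments. Unset Strict Implicit. Unset Printing Implicit Defensive.
Import Order.TTheory GRing.Theory Num.Theory.
Local Open Scope ring_scope.

Section LipFree.
Variables (R : realType) (M : Type) (d : M -> M -> R) (z : M).

Definition is_metric : Prop :=
  [/\ (forall x y, 0 <= d x y),
      (forall x y, d x y = 0 <-> x = y),
      (forall x y, d x y = d y x) &
      (forall x y w, d x w <= d x y + d y w)].

Definition metric_complete : Prop :=
  forall u : nat -> M,
    (forall e : R, 0 < e -> exists N, forall m n, (N <= m)%N -> (N <= n)%N -> d (u m) (u n) < e) ->
    exists x, forall e : R, 0 < e -> exists N, forall n, (N <= n)%N -> d (u n) x < e.

Definition Lip0 (f : M -> R) : Prop :=
  f z = 0 /\ exists C : R, forall x y, `|f x - f y| <= C * d x y.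

Definition Lip0_ball (f : M -> R) : Prop :=
  f z = 0 /\ forall x y, `|f x - f y| <= d x y.

(* functionals on Lip_0(M) (only their values on Lip_0(M) matter) *)
Definition functional := (M -> R) -> R.

Definition in_dual (Phi : functional) : Prop :=
  (forall (a b : R) f g, Lip0 f -> Lip0 g ->
      Phi (fun x => a * f x + b * g x) = a * Phi f + b * Phi g) /\
  exists C : R, forall f, Lip0_ball f -> `|Phi f| <= C.

Definition dual_dist_le (Phi Psi : functional) (e : R) : Prop :=
  forall f, Lip0_ball f -> `|Phi f - Psi f| <= e.

Definition delta (x : M) : functional := fun f => f x.

Definition delta_comb (n : nat) (a : 'I_n -> R) (y : 'I_n -> M) : functional :=
  fun f => \sum_(i < n) a i * f (y i).

Definition in_free_space (Phi : functional) : Prop :=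
  in_dual Phi /\
  forall e : R, 0 < e -> exists (n : nat) (a : 'I_n -> R) (y : 'I_n -> M),
      dual_dist_le Phi (delta_comb a y) e.

(* the set sum_{i=1}^k lambda_i delta(M) -- equality as elements of the dual *)
Definition sum_delta_set (k : nat) (lam : 'I_k -> R) (Phi : functional) : Prop :=
  exists xs : 'I_k -> M, forall f, Lip0 f -> Phi f = delta_comb lam xs f.

Definition norm_closed_subset_of_F (S : functional -> Prop) : Prop :=
  (forall Phi, S Phi -> in_free_space Phi) /\
  (forall (u : nat -> functional) (Phi : functional),
      (forall n, S (u n)) -> in_free_space Phi ->
      (forall e : R, 0 < e -> exists N, forall n, (N <= n)%N -> dual_dist_le (u n) Phi e) ->
      S Phi).

End LipFree.

(* Main.v *)
Require Import Defs.
From mathcomp Require Import all_boot all_order all_algebra.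
From mathcomp Require Import reals.
From mathcomp.algebra_tactics Require Import ring lra.
From Stdlib Require Import ClassicalEpsilon FunctionalExtensionality.
Set Implicit Arguments. Unset Strict Implicit. Unset Printing Implicit Defensive.
Import Order.TTheory GRing.Theory Num.Theory.
Local Open Scope ring_scope.

Definition bump (R : realType) (M : Type) (d : M -> M -> R) (p : M) (r : R) :=
  fun u => if d u p < r then r - d u p else 0.

Lemma bump_ball (R : realType) (M : Type) (d : M -> M -> R) (z p : M) (r : R) :
  is_metric d -> r <= d z p -> Lip0_ball d z (bump d p r).
Proof.
case=> d0 dE dS dT hz; split.
  by rewrite /bump ltNge hz.
move=> u v; rewrite /bump.
have h1 := dT u v p; have h2 := dT v u p; have h3 := dS u v.
case: ifP => hu; case: ifP => hv; rewrite ler_norml; apply/andP; split; lra.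
Qed.

Lemma bump_at (R : realType) (M : Type) (d : M -> M -> R) (p : M) (r : R) u :
  d u p < r -> bump d p r u = r - d u p.
Proof. by rewrite /bump => ->. Qed.

Lemma bump_out (R : realType) (M : Type) (d : M -> M -> R) (p : M) (r : R) u :
  r <= d u p -> bump d p r u = 0.
Proof. by rewrite /bump ltNge => ->. Qed.

Lemma pigeon (T : finType) (f : nat -> T) : exists t, forall N, exists m, (N <= m)%N /\ f m = t.
Proof.
apply: NNPP => H.
have H' : forall t, exists N, forall m, (N <= m)%N -> f m != t.
  move=> t; apply: NNPP => Ht; apply: H; exists t => N; apply: NNPP => HN; apply: Ht.
  exists N => m Nm; apply/eqP => fm; apply: HN; by exists m.
have [g Hg] : exists g : T -> nat, forall t m, (g t <= m)%N -> f m != t.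
  exists (fun t => proj1_sig (constructive_indefinite_description _ (H' t))).
  move=> t; exact: (proj2_sig (constructive_indefinite_description _ (H' t))).
have := Hg (f (\max_t g t)) (\max_t g t) (leq_bigmax _).
by rewrite eqxx.
Qed.

Lemma sum_D2 (R : realType) (k : nat) (F : 'I_k -> R) i j : i != j ->
  \sum_(l < k) F l = F i + F j + \sum_(l < k | (l != i) && (l != j)) F l.
Proof.
move=> ij; rewrite (bigD1 i) //= (bigD1 j) /=; last by rewrite eq_sym.
by rewrite addrA.
Qed.

Definition conv (R : realType) (M : Type) (d : M -> M -> R) (z : M) (k : nat)
  (lam : 'I_k -> R) (x : nat -> 'I_k -> M) (Phi : functional R M) :=
  forall e : R, 0 < e -> exists N, forall n, (N <= n)%N -> forall g, Lip0_ball d z g ->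
    `|delta_comb lam (x n) g - Phi g| <= e.

Definition repr (R : realType) (M : Type) (d : M -> M -> R) (z : M) (k : nat)
  (lam : 'I_k -> R) (Phi : functional R M) :=
  exists xs, forall g, Lip0_ball d z g -> Phi g = delta_comb lam xs g.

Definition cnt (R : realType) k (lam : 'I_k -> R) := #|[set i | lam i != 0]|.

Lemma ball_lip (R : realType) (M : Type) (d : M -> M -> R) (z : M) g u v :
  Lip0_ball d z g -> `|g u - g v| <= d u v.
Proof. by case=> _ ->. Qed.

Lemma comb_ext (R : realType) (M : Type) k (lam : 'I_k -> R) (w w' : 'I_k -> M) g :
  (forall l, lam l = 0 \/ w l = w' l) -> delta_comb lam w g = delta_comb lam w' g.
Proof.
move=> H; apply: eq_bigr => l _; by case: (H l) => ->; rewrite ?mul0r.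
Qed.

Lemma comb_zero (R : realType) (M : Type) k (lam : 'I_k -> R) (w : 'I_k -> M) g j :
  delta_comb (fun l => if l == j then 0 else lam l) w g = delta_comb lam w g - lam j * g (w j).
Proof.
rewrite /delta_comb (bigD1 j) //= [in RHS](bigD1 j) //= eqxx mul0r add0r.
rewrite (eq_bigr (fun l => lam l * g (w l))); first by ring.
by move=> l /negbTE ->.
Qed.

Lemma comb_merge (R : realType) (M : Type) k (lam : 'I_k -> R) (w : 'I_k -> M) g i j :
  i != j ->
  delta_comb (fun l => if l == i then 0 else if l == j then lam i + lam j else lam l) w g
  = delta_comb lam w g - lam i * g (w i) + lam i * g (w j).
Proof.
move=> ij; rewrite /delta_comb (sum_D2 _ ij) [in RHS](sum_D2 _ ij) eqxx.
rewrite eq_sym (negbTE ij) eqxx.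
rewrite (eq_bigr (fun l => lam l * g (w l))); first by ring.
by move=> l /andP[/negbTE -> /negbTE ->].
Qed.

Lemma cnt_lt (R : realType) k (lam lam' : 'I_k -> R) i :
  lam i != 0 -> lam' i = 0 -> (forall l, lam' l != 0 -> lam l != 0) -> (cnt lam' < cnt lam)%N.
Proof.
move=> h1 h2 h3; apply: proper_card; apply/properP; split.
  by apply/subsetP => l; rewrite !inE; apply: h3.
by exists i; rewrite !inE ?h1 ?h2 ?eqxx.
Qed.

Lemma conv_norm_bound (R : realType) (a c L D e : R) :
  `|a| <= e / 2 -> `|c| <= L * D -> 0 <= L -> 0 <= D -> D * (2 * (L + 1)) < e ->
  `|a - c| <= e.
Proof.
move=> h1 h2 hL hD h3.
have := ler_normB a c.
have h4 : L * D <= e / 2 by nra.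
lra.
Qed.

Lemma redA (R : realType) (M : Type) (d : M -> M -> R) (z : M) (hmet : is_metric d) (k : nat)
  (lam : 'I_k -> R) x Phi j (s : nat -> nat) y :
  (forall lam' : 'I_k -> R, (cnt lam' < cnt lam)%N -> forall x' Phi',
      conv d z lam' x' Phi' -> repr d z lam' Phi') ->
  lam j != 0 -> conv d z lam x Phi -> (forall n, (n <= s n)%N) ->
  (forall e, 0 < e -> exists N, forall n, (N <= n)%N -> d (x (s n) j) y < e) ->
  repr d z lam Phi.
Proof.
move=> IH hj hc hs hy.
pose lam' := fun l => if l == j then 0 else lam l.
have hlt : (cnt lam' < cnt lam)%N.
  apply: (cnt_lt hj); first by rewrite /lam' eqxx.
  by move=> l; rewrite /lam'; case: (l == j) => //; rewrite eqxx.
have hc' : conv d z lam' (fun n => x (s n)) (fun g => Phi g - lam j * g y).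
move=> e he.
have [N1 H1] := hc (e / 2) ltac:(lra).
have hpos : 0 < e / (2 * (`|lam j| + 1)).
  apply: divr_gt0 => //; have := normr_ge0 (lam j); lra.
have [N2 H2] := hy _ hpos.
exists (maxn N1 N2) => n hn g hg.
rewrite /lam' comb_zero.
have h1 := H1 (s n) (leq_trans (leq_trans (leq_maxl _ _) hn) (hs n)) g hg.
have h2 := H2 n (leq_trans (leq_maxr _ _) hn).
have h3 := ball_lip (x (s n) j) y hg.
have E : delta_comb lam (x (s n)) g - lam j * g (x (s n) j) - (Phi g - lam j * g y)
   = (delta_comb lam (x (s n)) g - Phi g) - lam j * (g (x (s n) j) - g y) by ring.
rewrite E; apply: (@conv_norm_bound R _ _ `|lam j| (d (x (s n) j) y) _ h1).
- by rewrite normrM ler_wpM2l.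
- by [].
- by case: hmet => + _ _ _; apply.
- by rewrite -ltr_pdivlMr // ; have := normr_ge0 (lam j); lra.
have [xs Hxs] := IH lam' hlt _ _ hc'.
  exists (fun l => if l == j then y else xs l) => g hg.
have E : delta_comb lam' xs g = delta_comb lam' (fun l => if l == j then y else xs l) g.
  by apply: comb_ext => l; rewrite /lam'; case: (l == j); [left|right].
have := Hxs g hg; rewrite E /lam' comb_zero eqxx => H; lra.
Qed.

Lemma redB (R : realType) (M : Type) (d : M -> M -> R) (z : M) (hmet : is_metric d) (k : nat)
  (lam : 'I_k -> R) x Phi i j (s : nat -> nat) :
  (forall lam' : 'I_k -> R, (cnt lam' < cnt lam)%N -> forall x' Phi',
      conv d z lam' x' Phi' -> repr d z lam' Phi') ->
  i != j -> lam i != 0 -> lam j != 0 -> conv d z lam x Phi -> (forall n, (n <= s n)%N) ->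
  (forall e, 0 < e -> exists N, forall n, (N <= n)%N -> d (x (s n) i) (x (s n) j) < e) ->
  repr d z lam Phi.
Proof.
move=> IH ij hi hj hc hs hy.
pose lam' := fun l => if l == i then 0 else if l == j then lam i + lam j else lam l.
have hlt : (cnt lam' < cnt lam)%N.
  apply: (cnt_lt hi); first by rewrite /lam' eqxx.
  move=> l; rewrite /lam'; case: (l == i); first by rewrite eqxx.
  by case hlj: (l == j) => //; rewrite (eqP hlj).
have hc' : conv d z lam' (fun n => x (s n)) Phi.
  move=> e he.
  have [N1 H1] := hc (e / 2) ltac:(lra).
  have hpos : 0 < e / (2 * (`|lam i| + 1)).
    apply: divr_gt0 => //; have := normr_ge0 (lam i); lra.
  have [N2 H2] := hy _ hpos.
  exists (maxn N1 N2) => n hn g hg.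
  rewrite /lam' comb_merge //.
  have h1 := H1 (s n) (leq_trans (leq_trans (leq_maxl _ _) hn) (hs n)) g hg.
  have h2 := H2 n (leq_trans (leq_maxr _ _) hn).
  have h3 := ball_lip (x (s n) i) (x (s n) j) hg.
  have E : delta_comb lam (x (s n)) g - lam i * g (x (s n) i) + lam i * g (x (s n) j) - Phi g
     = (delta_comb lam (x (s n)) g - Phi g) - lam i * (g (x (s n) i) - g (x (s n) j)) by ring.
  rewrite E; apply: (@conv_norm_bound R _ _ `|lam i| (d (x (s n) i) (x (s n) j)) _ h1).
  - by rewrite normrM ler_wpM2l.
  - by [].
  - by case: hmet => + _ _ _; apply.
  - by rewrite -ltr_pdivlMr // ; have := normr_ge0 (lam i); lra.
have [xs Hxs] := IH lam' hlt _ _ hc'.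
exists (fun l => if l == i then xs j else xs l) => g hg.
have E : delta_comb lam' xs g = delta_comb lam' (fun l => if l == i then xs j else xs l) g.
  apply: comb_ext => l; rewrite /lam'; case: (l == i); [left|right] => //.
have := Hxs g hg; rewrite E /lam' comb_merge // eqxx => ->; rewrite if_same; ring.
Qed.

Lemma alg_key (R : realType) (a b r dd eta : R) :
  0 < r -> 0 <= dd -> dd < r -> 2 * eta <= `|a| * r ->
  `|a * r - b * (r - dd)| <= eta -> `|a * (r - dd) - b * r| <= eta ->
  `|a| * dd <= 2 * eta.
Proof.
move=> hr hd hdr he h1 h2.
have e1 : (a - b) * (2 * r - dd) = (a * r - b * (r - dd)) + (a * (r - dd) - b * r) by ring.
have e2 : (a + b) * dd = (a * r - b * (r - dd)) - (a * (r - dd) - b * r) by ring.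
have k1 : `|(a - b) * (2 * r - dd)| <= 2 * eta.
  by rewrite e1; apply: (le_trans (ler_normD _ _)); lra.
have k2 : `|(a + b) * dd| <= 2 * eta.
  by rewrite e2; apply: (le_trans (ler_normB _ _)); lra.
rewrite normrM (ger0_norm (x := 2 * r - dd)) in k1; last by lra.
rewrite normrM (ger0_norm hd) in k2.
have k3 : `|a - b| * r <= 2 * eta.
  apply: le_trans k1; apply: ler_wpM2l; [exact: normr_ge0 | lra].
have k4 : `|a - b| <= `|a| by rewrite -(ler_pM2r hr); lra.
have k5 : `|a| <= `|a + b|.
  have : `|(a + b) + (a - b)| <= `|a + b| + `|a - b| by apply: ler_normD.
  have -> : (a + b) + (a - b) = 2 * a by ring.
  rewrite normrM ger0_norm; [lra | lra].
apply: le_trans k2; apply: ler_wpM2r => //.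
Qed.

Definition sep (R : realType) (M : Type) (d : M -> M -> R) (z : M) k (lam : 'I_k -> R)
  (w : 'I_k -> M) (eps : R) :=
  (forall i, lam i != 0 -> eps <= d (w i) z) /\
  (forall i j, i != j -> lam i != 0 -> lam j != 0 -> eps <= d (w i) (w j)).

Definition close (R : realType) (M : Type) (d : M -> M -> R) (z : M) k (lam : 'I_k -> R)
  (w w' : 'I_k -> M) (eta : R) :=
  forall g, Lip0_ball d z g -> `|delta_comb lam w g - delta_comb lam w' g| <= eta.

Lemma comb_bump (R : realType) (M : Type) (d : M -> M -> R) k (lam : 'I_k -> R)
  (w : 'I_k -> M) p r j :
  (forall i, i != j -> lam i = 0 \/ r <= d (w i) p) -> d (w j) p < r ->
  delta_comb lam w (bump d p r) = lam j * (r - d (w j) p).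
Proof.
move=> H hj; rewrite /delta_comb (bigD1 j) //= bump_at // big1 ?addr0 //.
move=> i /H [->|h]; first by rewrite mul0r.
by rewrite bump_out // mulr0.
Qed.

Lemma comb_bump0 (R : realType) (M : Type) (d : M -> M -> R) k (lam : 'I_k -> R)
  (w : 'I_k -> M) p r :
  (forall i, lam i = 0 \/ r <= d (w i) p) -> delta_comb lam w (bump d p r) = 0.
Proof.
move=> H; rewrite /delta_comb big1 // => i _.
case: (H i) => [->|h]; first by rewrite mul0r.
by rewrite bump_out // mulr0.
Qed.

Lemma matchA (R : realType) (M : Type) (d : M -> M -> R) (z : M) (hmet : is_metric d) k
  (lam : 'I_k -> R) (w w' : 'I_k -> M) eps eta j :
  0 < eps -> sep d z lam w eps -> sep d z lam w' eps -> close d z lam w w' eta ->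
  lam j != 0 -> eta < `|lam j| * (eps / 2) ->
  exists j', lam j' != 0 /\ d (w j) (w' j') < eps / 2.
Proof.
case: (hmet) => d0 dE dS dT.
move=> he [s1 s2] [s1' s2'] hc hj heta.
apply: NNPP => H.
have hb : Lip0_ball d z (bump d (w j) (eps / 2)).
  apply: bump_ball => //; rewrite dS; have := s1 j hj; lra.
have := hc _ hb.
rewrite (@comb_bump _ _ _ _ _ _ _ _ j); first last.
- by rewrite (proj2 (dE _ _) erefl); lra.
- move=> i ij; case: (eqVneq (lam i) 0) => [->|hi]; [by left|right].
  by have := s2 i j ij hi hj; lra.
rewrite (@comb_bump0 _ _ _ _ _ _ _ _); last first.
  move=> i; case: (eqVneq (lam i) 0) => [->|hi]; [by left|right].
  rewrite dS leNgt; apply/negP => hlt; apply: H; by exists i.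
rewrite (proj2 (dE _ _) erefl) subr0 subr0 normrM (gtr0_norm (x := eps / 2)); last by lra.
lra.
Qed.

Lemma matchB (R : realType) (M : Type) (d : M -> M -> R) (z : M) (hmet : is_metric d) k
  (lam : 'I_k -> R) (w w' : 'I_k -> M) eps eta j j' :
  0 < eps -> sep d z lam w eps -> sep d z lam w' eps -> close d z lam w w' eta ->
  lam j != 0 -> lam j' != 0 -> d (w j) (w' j') < eps / 2 -> 2 * eta <= `|lam j| * (eps / 2) ->
  `|lam j| * d (w j) (w' j') <= 2 * eta.
Proof.
case: (hmet) => d0 dE dS dT.
move=> he [s1 s2] [s1' s2'] hc hj hj' hd heta.
have hb1 : Lip0_ball d z (bump d (w j) (eps / 2)).
  apply: bump_ball => //; rewrite dS; have := s1 j hj; lra.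
have hb2 : Lip0_ball d z (bump d (w' j') (eps / 2)).
  apply: bump_ball => //; rewrite dS; have := s1' j' hj'; lra.
have h1 := hc _ hb1.
have h2 := hc _ hb2.
rewrite (@comb_bump _ _ _ _ _ _ _ _ j) in h1; first last.
- by rewrite (proj2 (dE _ _) erefl); lra.
- move=> i ij; case: (eqVneq (lam i) 0) => [->|hi]; [by left|right].
  by have := s2 i j ij hi hj; lra.
rewrite (@comb_bump _ _ _ _ _ _ _ _ j') in h1; first last.
- by rewrite dS.
- move=> i ij; case: (eqVneq (lam i) 0) => [->|hi]; [by left|right].
  have := s2' i j' ij hi hj'; have := dT (w' i) (w j) (w' j'); rewrite (dS (w' i) (w j)); lra.
rewrite (@comb_bump _ _ _ _ _ _ _ _ j) in h2; first last.
- by [].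
- move=> i ij; case: (eqVneq (lam i) 0) => [->|hi]; [by left|right].
  have := s2 i j ij hi hj; have := dT (w i) (w' j') (w j); rewrite (dS (w' j') (w j)); lra.
rewrite (@comb_bump _ _ _ _ _ _ _ _ j') in h2; first last.
- by rewrite (proj2 (dE _ _) erefl); lra.
- move=> i ij; case: (eqVneq (lam i) 0) => [->|hi]; [by left|right].
  by have := s2' i j' ij hi hj'; lra.
rewrite (proj2 (dE _ _) erefl) subr0 in h1.
rewrite (proj2 (dE _ _) erefl) subr0 in h2.
rewrite dS in h1.
apply: (@alg_key _ _ (lam j') (eps / 2)) => //; try lra.
Qed.

Lemma fchoice (A B : Type) (P : A -> B -> Prop) :
  (forall a, exists b, P a b) -> exists f : A -> B, forall a, P a (f a).
Proof.
move=> H; exists (fun a => proj1_sig (constructive_indefinite_description _ (H a))).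
move=> a; exact: (proj2_sig (constructive_indefinite_description _ (H a))).
Qed.

Lemma inv_small (R : realType) (e : R) : 0 < e ->
  exists N, forall m, (N <= m)%N -> (m.+1%:R : R)^-1 < e.
Proof.
move=> he; have h0 : 0 <= e^-1 by rewrite invr_ge0 ltW.
exists (Num.Def.archi_bound e^-1) => m hm.
have h1 := archi_boundP h0.
have h2 : (Num.Def.archi_bound e^-1)%:R <= (m.+1%:R : R) by rewrite ler_nat; apply: (leq_trans hm).
rewrite -[e]invrK ltf_pV2 ?posrE ?invr_gt0 ?ltr0n //; lra.
Qed.

Lemma conv_close (R : realType) (M : Type) (d : M -> M -> R) (z : M) k (lam : 'I_k -> R) x Phi :
  conv d z lam x Phi -> forall e, 0 < e -> exists N, forall n m, (N <= n)%N -> (N <= m)%N ->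
  close d z lam (x n) (x m) (2 * e).
Proof.
move=> hc e he; have [N HN] := hc e he; exists N => n m hn hm g hg.
have h1 := HN n hn g hg; have h2 := HN m hm g hg.
have := ler_normB (delta_comb lam (x n) g - Phi g) (delta_comb lam (x m) g - Phi g).
have -> : delta_comb lam (x n) g - Phi g - (delta_comb lam (x m) g - Phi g)
  = delta_comb lam (x n) g - delta_comb lam (x m) g by ring.
lra.
Qed.

Lemma allzero (R : realType) (M : Type) (d : M -> M -> R) (z : M) k (lam : 'I_k -> R) x Phi :
  (forall i, lam i = 0) -> conv d z lam x Phi -> repr d z lam Phi.
Proof.
move=> h0 hc; exists (fun _ => z) => g hg.
have E : forall w, delta_comb lam w g = 0.
  by move=> w; rewrite /delta_comb big1 // => i _; rewrite h0 mul0r.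
rewrite E; apply/eqP; apply: NNPP => hne.
have hn : 0 < `|Phi g| by rewrite normr_gt0; apply/negP.
have hp : 0 < `|Phi g| / 2 by rewrite divr_gt0.
have [N HN] := hc _ hp.
have := HN N (leqnn _) g hg; rewrite E sub0r normrN.
lra.
Qed.

Lemma caseI (R : realType) (M : Type) (d : M -> M -> R) (z : M) (hmet : is_metric d)
  (hcomp : metric_complete d) (k : nat) (lam : 'I_k -> R) x Phi i0 eps N :
  (forall lam' : 'I_k -> R, (cnt lam' < cnt lam)%N -> forall x' Phi',
      conv d z lam' x' Phi' -> repr d z lam' Phi') ->
  lam i0 != 0 -> 0 < eps -> (forall n, (N <= n)%N -> sep d z lam (x n) eps) ->
  conv d z lam x Phi -> repr d z lam Phi.
Proof.
move=> IH hi0 he hsep hc.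
case: (hmet) => d0 dE dS dT.
have c0 : 0 < `|lam i0| by rewrite normr_gt0.
have cr0 : 0 < `|lam i0| * (eps / 2) by apply: mulr_gt0 => //; lra.
pose e0 := `|lam i0| * (eps / 2) / 16.
have he0 : 0 < e0 by rewrite /e0; lra.
have [N1 HN1] := conv_close hc he0.
pose n0 := maxn N N1.
have hf : forall m, exists j', lam j' != 0 /\ d (x n0 i0) (x (m + n0)%N j') <= eps / 2 / 4.
  move=> m.
  have s0 : sep d z lam (x n0) eps := hsep n0 (leq_maxl _ _).
  have s1 : sep d z lam (x (m + n0)%N) eps := hsep _ (leq_trans (leq_maxl N N1) (leq_addl m n0)).
  have cl : close d z lam (x n0) (x (m + n0)%N) (2 * e0) :=
    HN1 _ _ (leq_maxr _ _) (leq_trans (leq_maxr N N1) (leq_addl _ _)).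
  have [j' [hj' hd]] := matchA hmet he s0 s1 cl hi0 ltac:(rewrite /e0; lra).
  exists j'; split => //.
  have := matchB hmet he s0 s1 cl hi0 hj' hd ltac:(rewrite /e0; lra).
  move=> hb; rewrite -(ler_pM2l c0); rewrite /e0 in hb; lra.
have [f Hf] := fchoice hf.
have [j Hj] := pigeon f.
have [mm Hmm] := fchoice Hj.
pose s := fun t => (mm t + n0)%N.
have hs : forall t, (t <= s t)%N by move=> t; exact: leq_trans (Hmm t).1 (leq_addr _ _).
have hsN : forall t, (N <= s t)%N by move=> t; exact: leq_trans (leq_maxl N N1) (leq_addl _ _).
have hj : lam j != 0 by have [_ <-] := Hmm 0%N; exact: (Hf _).1.
have hp : forall t, d (x n0 i0) (x (s t) j) <= eps / 2 / 4.
  by move=> t; rewrite /s; have [_ <-] := Hmm t; exact: (Hf _).2.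
have c1 : 0 < `|lam j| by rewrite normr_gt0.
have cr1 : 0 < `|lam j| * (eps / 2) by apply: mulr_gt0 => //; lra.
have hcauchy : forall e, 0 < e -> exists N', forall a b, (N' <= a)%N -> (N' <= b)%N ->
    d (x (s a) j) (x (s b) j) < e.
  move=> e he'.
  have ce : 0 < `|lam j| * e by apply: mulr_gt0.
  pose e1 := Num.min (`|lam j| * (eps / 2) / 16) (`|lam j| * e / 8).
  have k1 : e1 <= `|lam j| * (eps / 2) / 16 by rewrite /e1 ge_min lexx.
  have k2 : e1 <= `|lam j| * e / 8 by rewrite /e1 ge_min lexx orbT.
  have he1 : 0 < e1 by rewrite /e1 lt_min; apply/andP; split; lra.
  have [N2 HN2] := conv_close hc he1.
  exists N2 => a b ha hb.
  have cl : close d z lam (x (s a)) (x (s b)) (2 * e1) :=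
    HN2 _ _ (leq_trans ha (hs a)) (leq_trans hb (hs b)).
  have hd : d (x (s a) j) (x (s b) j) < eps / 2.
    have := dT (x (s a) j) (x n0 i0) (x (s b) j); rewrite (dS (x (s a) j) (x n0 i0)).
    have := hp a; have := hp b; lra.
  have := matchB hmet he (hsep _ (hsN a)) (hsep _ (hsN b)) cl hj hj hd ltac:(lra).
  move=> hb'; rewrite -(ltr_pM2l c1); lra.
have [y Hy] := hcomp (fun t => x (s t) j) hcauchy.
exact: (redA hmet IH hj hc hs Hy).
Qed.

Lemma step (R : realType) (M : Type) (d : M -> M -> R) (z : M) (hmet : is_metric d)
  (hcomp : metric_complete d) (k : nat) (lam : 'I_k -> R) x Phi :
  (forall lam' : 'I_k -> R, (cnt lam' < cnt lam)%N -> forall x' Phi',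
      conv d z lam' x' Phi' -> repr d z lam' Phi') ->
  conv d z lam x Phi -> repr d z lam Phi.
Proof.
move=> IH hc.
case: (classic (exists i0, lam i0 != 0)) => [[i0 hi0]|hnone]; last first.
  apply: (allzero (x := x)) hc => i; apply/eqP; apply: NNPP => h; apply: hnone.
  by exists i; apply/negP.
case: (classic (exists eps : R, 0 < eps /\ exists N, forall n, (N <= n)%N -> sep d z lam (x n) eps))
  => [[eps [he [N HN]]]|hno].
  exact: (caseI hmet hcomp IH hi0 he HN hc).
pose ev (e : 'I_k * 'I_k) n (t : R) := lam e.1 != 0 /\
  (if e.1 == e.2 then is_true (d (x n e.1) z < t) else lam e.2 != 0 /\ d (x n e.1) (x n e.2) < t).
have hm : forall m, exists p : nat * ('I_k * 'I_k), (m <= p.1)%N /\ ev p.2 p.1 (m.+1%:R^-1).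
  move=> m; apply: NNPP => H; apply: hno.
  exists (m.+1%:R^-1); split; first by rewrite invr_gt0 ltr0n.
  exists m => n hn; split.
  - move=> i hi; rewrite leNgt; apply/negP => hlt; apply: H; exists (n, (i, i)); split => //.
    by rewrite /ev /= eqxx.
  - move=> i j ij hi hj; rewrite leNgt; apply/negP => hlt; apply: H; exists (n, (i, j)); split => //.
    by rewrite /ev /= (negbTE ij).
have [g Hg] := fchoice hm.
have [e He] := pigeon (fun m => (g m).2).
have [mm Hmm] := fchoice He.
pose s := fun t => (g (mm t)).1.
have hs : forall t, (t <= s t)%N by move=> t; rewrite /s; exact: leq_trans (Hmm t).1 (Hg _).1.
have hev : forall t, ev e (s t) ((mm t).+1%:R^-1) by move=> t; rewrite /s -(Hmm t).2; exact: (Hg _).2.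
have tol : forall t, ((mm t).+1%:R^-1 : R) <= (t.+1%:R)^-1.
  move=> t; rewrite lef_pV2 ?posrE ?ltr0n // ler_nat ltnS; exact: (Hmm t).1.
clearbody s.
case: e {He Hmm} hev => i j hev.
have hi : lam i != 0 by have := (hev 0%N).1.
case: (eqVneq i j) => [ij|ij].
  subst j.
  apply: (@redA _ _ _ _ hmet _ _ _ _ _ _ z IH hi hc hs) => eps he; have [N HN] := inv_small he; exists N => t ht.
  have := hev t; rewrite /ev /= eqxx => -[_ h]; exact: (lt_trans (lt_le_trans h (tol t)) (HN t ht)).
have hj : lam j != 0 by have := (hev 0%N).2; rewrite /= (negbTE ij) => -[].
apply: (redB hmet IH ij hi hj hc hs) => eps he; have [N HN] := inv_small he; exists N => t ht.
have := hev t; rewrite /ev /= (negbTE ij) => -[_ [_ h]]; exact: (lt_trans (lt_le_trans h (tol t)) (HN t ht)).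
Qed.

Lemma core (R : realType) (M : Type) (d : M -> M -> R) (z : M) (hmet : is_metric d)
  (hcomp : metric_complete d) (k : nat) :
  forall n (lam : 'I_k -> R), (cnt lam <= n)%N -> forall x Phi,
    conv d z lam x Phi -> repr d z lam Phi.
Proof.
elim=> [|n IHn] lam hn x Phi hc; apply: (step hmet hcomp _ hc) => lam' hlt.
  by have := leq_trans hlt hn; rewrite ltn0.
move=> x' Phi'; apply: IHn; rewrite -ltnS; exact: leq_trans hlt hn.
Qed.

Lemma ball_Lip0 (R : realType) (M : Type) (d : M -> M -> R) (z : M) g :
  Lip0_ball d z g -> Lip0 d z g.
Proof. by case=> h0 h; split => //; exists 1 => u v; rewrite mul1r. Qed.

Theorem lemma3p16 (R : realType) (M : Type) (d : M -> M -> R) (z : M)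
  (hmet : is_metric d) (hcomp : metric_complete d)
  (k : nat) (lam : 'I_k -> R) :
  norm_closed_subset_of_F d z (sum_delta_set d z lam).
Proof.
case: (hmet) => d0 dE dS dT.
split.
- move=> Phi [xs Hxs]; split; last first.
    move=> e he; exists k, lam, xs => f hf.
    rewrite (Hxs f (ball_Lip0 hf)) subrr normr0; exact: ltW.
  split.
    move=> a b f g hf hg.
    have hfg : Lip0 d z (fun x => a * f x + b * g x).
      case: hf => f0 [C1 HC1]; case: hg => g0 [C2 HC2]; split.
        by rewrite f0 g0 !mulr0 addr0.
      exists (`|a| * C1 + `|b| * C2) => u v.
      have -> : a * f u + b * g u - (a * f v + b * g v) = a * (f u - f v) + b * (g u - g v) by ring.
      apply: (le_trans (ler_normD _ _)); rewrite !normrM mulrDl -!mulrA.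
      by apply: lerD; apply: ler_wpM2l => //; apply: normr_ge0.
    rewrite (Hxs _ hf) (Hxs _ hg) (Hxs _ hfg) /delta_comb !mulr_sumr -big_split /=.
    by apply: eq_bigr => i _; ring.
  exists (\sum_(i < k) `|lam i| * d (xs i) z) => f hf.
  rewrite (Hxs f (ball_Lip0 hf)) /delta_comb.
  apply: (le_trans (ler_norm_sum _ _ _)); apply: ler_sum => i _.
  rewrite normrM; apply: ler_wpM2l; first exact: normr_ge0.
  case: hf => f0 hl; have := hl (xs i) z; by rewrite f0 subr0.
- move=> u Phi hu hF hconv.
  have [xsf Hxsf] := fchoice hu.
  have hc : conv d z lam xsf Phi.
    move=> e he; have [N HN] := hconv e he; exists N => n hn g hg.
    rewrite -(Hxsf n g (ball_Lip0 hg)); exact: HN n hn g hg.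
  have [xs Hxs] := core hmet hcomp (leqnn (cnt lam)) hc.
  exists xs => f hf.
  case: (hf) => f0 [C HC].
  pose D := `|C| + 1.
  have hD : 0 < D by rewrite /D; have := normr_ge0 C; lra.
  have hD0 : D != 0 by rewrite gt_eqF.
  pose g := fun x => D^-1 * f x.
  have hg : Lip0_ball d z g.
    split; first by rewrite /g f0 mulr0.
    move=> v w; rewrite /g -mulrBr normrM (gtr0_norm (x := D^-1)) ?invr_gt0 //.
    rewrite ler_pdivrMl //.
    apply: (le_trans (HC v w)); apply: ler_wpM2r; first exact: d0.
    by rewrite /D; have := ler_norm C; lra.
  have Ef : f = (fun x => D * g x + 0 * g x).
    by apply: functional_extensionality => x; rewrite /g mul0r addr0 mulrA mulfV // mul1r.
  have hgL := ball_Lip0 hg.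
  rewrite Ef (hF.1.1 _ _ _ _ hgL hgL) mul0r addr0 (Hxs _ hg) /delta_comb mulr_sumr.
  by apply: eq_bigr => i _; rewrite /g; field.
Qed.
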